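(* Let $n$ be an even nonnegative integer, and let $\mathbf n=\mathbf n_1\cdots\mathbf n_r$ be the block decomposition of its minimal hyperbinary expansion ($r=0$ if $n=0$). Let $(a_1,\dots,a_r)$ be the lengths of the blocks as words, and let $(t_1,\dots,t_r)\in\{1,2\}^r$ be their types. Define functions on triples of integers: \[b_1(\alpha,\beta,\sigma)=\alpha\beta+\sigma,\qquad b_2(\alpha,\beta,\sigma)=\beta+\alpha\sigma,\] \[s_1(\alpha,\beta,\sigma)=(\alpha-1)\beta+\sigma,\qquad s_2(\alpha,\beta,\sigma)=\sigma.\] Set $h_0=k_0=1$, and for $i\in\{0,\dots,r-1\}$ set \[h_{i+1}=b_{t_{r-i}}(a_{r-i},h_i,k_i),\qquad k_{i+1}=s_{t_{r-i}}(a_{r-i},h_i,k_i).\] Then $b(n)=h_r$.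
   Context: A hyperbinary expansion of a nonnegative integer $m$ is a word $x_0\cdots x_k$ over $\{0,1,2\}$ with $x_0\ne0$ and $\sum_i x_i2^{k-i}=m$; the empty word is the unique hyperbinary expansion of $0$. $b(m)$ is the number of hyperbinary expansions of $m$. The minimal hyperbinary expansion of $m$ is its unique hyperbinary expansion with no digit $0$. A block of type $1$ is a word $1^t2$ (length $t+1$) and a block of type $2$ is a word $2^t$ (length $t$), with $t\ge1$. The minimal hyperbinary expansion of a positive even integer can be written uniquely as a concatenation of blocks with no two consecutive blocks of type $2$; this is its block decomposition. *)

(* Defs.v *)
From mathcomp Require Import all_boot.
Set Implicit Arguments. Unset Strict Implicit. Unset Printing Implicit Defensive.

(* Words over {0,1,2} are represented as seq nat with all digits <= 2. *)

Definition hval (w : seq nat) : nat := foldl (fun acc d => acc * 2 + d) 0 w.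

(* w is a hyperbinary expansion of m: digits in {0,1,2}, leading digit
   nonzero (the empty word is allowed and has value 0), value m. *)
Definition is_hyperbinary (m : nat) (w : seq nat) : bool :=
  all (fun d => d <= 2) w && (head 1 w != 0) && (hval w == m).

Fixpoint words (k : nat) : seq (seq nat) :=
  if k is k'.+1 then [seq d :: w | d <- iota 0 3, w <- words k'] else [:: [::]].

(* A hyperbinary expansion of
   length L >= 1 has value >= 2^(L-1) >= L, so every expansion of m has length
   at most m; we count over all words of length <= m+1 (a safe bound). *)
Definition hb (m : nat) : nat :=
  \sum_(L < m.+2) count (is_hyperbinary m) (words L).

(* the minimal hyperbinary expansion: a hyperbinary expansion with no 0 digit *)
Definition is_minimal_hyperbinary (m : nat) (w : seq nat) : bool :=
  is_hyperbinary m w && (0 \notin w).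

(* A block is (type, t): type 1 gives 1^t 2, type 2 gives 2^t, t >= 1. *)
Definition block_word (blk : nat * nat) : seq nat :=
  if blk.1 == 1 then rcons (nseq blk.2 1) 2 else nseq blk.2 2.

Definition block_ok (blk : nat * nat) : bool :=
  ((blk.1 == 1) || (blk.1 == 2)) && (1 <= blk.2).

Definition block_len (blk : nat * nat) : nat := size (block_word blk).

Fixpoint no_consec2 (bs : seq (nat * nat)) : bool :=
  match bs with
  | b1 :: ((b2 :: _) as bs') => ~~ ((b1.1 == 2) && (b2.1 == 2)) && no_consec2 bs'
  | _ => true
  end.

Definition is_block_decomposition (w : seq nat) (bs : seq (nat * nat)) : bool :=
  all block_ok bs && no_consec2 bs && (flatten (map block_word bs) == w).

Definition bfun (t a h k : nat) : nat := if t == 1 then a * h + k else h + a * k.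
Definition sfun (t a h k : nat) : nat := if t == 1 then (a - 1) * h + k else k.

(* one step (h_i, k_i) -> (h_{i+1}, k_{i+1}) using block n_{r-i} *)
Definition hk_step (blk : nat * nat) (hk : nat * nat) : nat * nat :=
  (bfun blk.1 (block_len blk) hk.1 hk.2, sfun blk.1 (block_len blk) hk.1 hk.2).

(* (h_r, k_r): foldr processes the last block n_r first, starting from (1,1) *)
Definition hk (bs : seq (nat * nat)) : nat * nat := foldr hk_step (1, 1) bs.

(* Main.v *)
Require Import Defs.
From mathcomp Require Import all_boot zify.

Definition A L m := count (is_hyperbinary m) (words L).

Lemma mem_words L w : (w \in words L) = (size w == L) && all (fun d => d < 3) w.
Proof.
elim: L w => [|L IH] w.
  by case: w.
apply/allpairsP/idP => [[[d u] [Hd Hu ->]]|].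
  move: Hu Hd; rewrite IH /= => /andP[/eqP -> ->]; rewrite eqxx andbT.
  by rewrite !inE => /or3P[]/eqP->.
case: w => [|d u] //= /andP [Hs /andP [Hd Ha]]; exists (d,u).
rewrite /= IH -eqSS Hs Ha; split=> //.
by move: Hd; case: d => [|[|[|]]].
Qed.

Lemma uniq_words L : uniq (words L).
Proof.
elim: L => [|L IH] //.
change (uniq [seq d :: w | d <- iota 0 3, w <- words L]).
apply: (@allpairs_uniq nat (seq nat) (seq nat) (fun d w => d :: w)) => //.
by move=> [a b] [c e] _ _ /= [-> ->].
Qed.

Lemma perm_words_rev L : perm_eq (map rev (words L)) (words L).
Proof.
apply: uniq_perm.
- rewrite map_inj_uniq ?uniq_words //; exact: inv_inj revK.
- exact: uniq_words.
move=> w; apply/mapP/idP => [[u Hu ->]|Hw].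
  by move: Hu; rewrite !mem_words size_rev all_rev.
exists (rev w); last by rewrite revK.
by move: Hw; rewrite !mem_words size_rev all_rev.
Qed.

Lemma count_words_S (P : pred (seq nat)) L :
  count P (words L.+1) = count (fun u => P (rcons u 0)) (words L)
    + count (fun u => P (rcons u 1)) (words L) + count (fun u => P (rcons u 2)) (words L).
Proof.
rewrite -(permP (perm_words_rev L.+1) P) count_map /= !count_cat !count_map addn0 addnA.
congr (_ + _ + _); rewrite -[LHS](permP (perm_words_rev L)) count_map;
  by apply: eq_count => u /=; rewrite rev_cons revK.
Qed.

Lemma hval_rcons u d : hval (rcons u d) = hval u * 2 + d.
Proof. by rewrite /hval foldl_rcons. Qed.

Lemma hyp_rcons m u d : all (fun x => x <= 2) u -> d <= 2 ->
  is_hyperbinary m (rcons u d) = (head d u != 0) && (hval u * 2 + d == m).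
Proof.
move=> Hu Hd; rewrite /is_hyperbinary all_rcons Hd Hu hval_rcons /=.
by case: u Hu.
Qed.

Lemma hyp_all m u : all (fun x => x <= 2) u ->
  is_hyperbinary m u = (head 1 u != 0) && (hval u == m).
Proof. by move=> Hu; rewrite /is_hyperbinary Hu. Qed.

Lemma words_le2 L u : u \in words L -> all (fun x => x <= 2) u.
Proof.
rewrite mem_words => /andP[_]; apply: sub_all => x /=. lia.
Qed.

Lemma A0 m : A 0 m = (m == 0).
Proof. by rewrite /A /= /is_hyperbinary /= addn0 eq_sym. Qed.

Lemma hval0 u : (hval u == 0) = all (fun x => x == 0) u.
Proof.
elim/last_ind: u => [|u d IH] //.
rewrite hval_rcons all_rcons -IH andbC.
by apply/eqP/andP => [H|[/eqP H1 /eqP H2]]; [split; apply/eqP; lia | lia].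
Qed.

Lemma AS0 L : A L.+1 0 = 0.
Proof.
rewrite /A count_words_S.
have H d : count (fun u => is_hyperbinary 0 (rcons u d)) (words L) = 0.
  apply/eqP; rewrite -leqn0 leqNgt -has_count; apply/hasPn => u Hu.
  rewrite /is_hyperbinary hval_rcons all_rcons.
  case Hd: (hval u * 2 + d == 0); rewrite ?andbF // ?andbT.
  have /andP[Hu0 /eqP Ed] : (hval u == 0) && (d == 0) by apply/andP; split; apply/eqP; lia.
  subst d; move: Hu0; rewrite hval0; case: u {Hu Hd} => [|x u] /= //.
  by move=> /andP[/eqP -> _]; rewrite /= andbF.
by rewrite !H.
Qed.

Lemma A_odd L k : A L.+1 (k * 2 + 1) = A L k.
Proof.
rewrite /A count_words_S.
rewrite [X in X + _ + _](@eq_in_count _ _ pred0); last first.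
  move=> u /words_le2 Hu; rewrite hyp_rcons //=.
  by case: (head 0 u != 0) => //=; apply/eqP; lia.
rewrite [X in _ + X + _](@eq_in_count _ _ (is_hyperbinary k)); last first.
  move=> u /words_le2 Hu; rewrite hyp_rcons // hyp_all //.
  by congr andb; apply/eqP/eqP; lia.
rewrite [X in _ + _ + X](@eq_in_count _ _ pred0); last first.
  move=> u /words_le2 Hu; rewrite hyp_rcons //=.
  by case: (head 2 u != 0) => //=; apply/eqP; lia.
have E0 : forall s : seq (seq nat), count pred0 s = 0 by elim.
by rewrite !E0 add0n addn0.
Qed.

Lemma A_even L k : A L.+1 (k * 2 + 2) = A L k.+1 + A L k.
Proof.
rewrite /A count_words_S.
rewrite [X in X + _ + _](@eq_in_count _ _ (is_hyperbinary k.+1)); last first.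
  move=> u /words_le2 Hu; rewrite hyp_rcons // hyp_all //.
  case: u {Hu} => [|x u] /=; first by [].
  by congr andb; apply/eqP/eqP; lia.
rewrite [X in _ + X + _](@eq_in_count _ _ pred0); last first.
  move=> u /words_le2 Hu; rewrite hyp_rcons //=.
  by case: (head 1 u != 0) => //=; apply/eqP; lia.
rewrite [X in _ + _ + X](@eq_in_count _ _ (is_hyperbinary k)); last first.
  move=> u /words_le2 Hu; rewrite hyp_rcons // hyp_all //.
  case: u {Hu} => [|x u] /=; first by apply/eqP/eqP; lia.
  by congr andb; apply/eqP/eqP; lia.
have E0 : forall s : seq (seq nat), count pred0 s = 0 by elim.
by rewrite E0 addn0.
Qed.

Lemma cases3 m : m = 0 \/ (exists k, m = k * 2 + 1) \/ (exists k, m = k * 2 + 2).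
Proof.
have := odd_double_half m; rewrite -muln2.
case: (odd m) => /= H; first by right; left; exists m./2; lia.
case: m H => [|m] H; first by left.
right; right; exists (m.+1./2 - 1); move: H; move: (m.+1./2) => h; rewrite add0n => H; lia.
Qed.

Lemma A_big L m : m.+1 < L -> A L m = 0.
Proof.
elim: L m => [|L IH] m //= HL.
move: HL; case: (cases3 m) => [->|[[k ->]|[k ->]]] HL.
- exact: AS0.
- rewrite A_odd; apply: IH; lia.
- rewrite A_even !IH //; lia.
Qed.

Lemma hbE m N : m.+2 <= N -> hb m = \sum_(L < N) A L m.
Proof.
move=> HN; rewrite /hb (big_ord_widen N (fun L => A L m) HN).
rewrite big_mkcond; apply: eq_bigr => i _.
case: ifP => // /negbT; rewrite -leqNgt => H; rewrite A_big //.
Qed.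

Lemma hb0 : hb 0 = 1.
Proof. by rewrite /hb !big_ord_recr big_ord0 /=. Qed.

Lemma hbA m : hb m = \sum_(L < m.+2) A L m.
Proof. by []. Qed.

Lemma hb_odd k : hb (k * 2 + 1) = hb k.
Proof.
rewrite hbA big_ord_recl A0 addn1 /= add0n.
rewrite (@hbE k (k * 2).+2); last by lia.
by apply: eq_bigr => i _; rewrite /bump /= add1n; move: (nat_of_ord i) => j; rewrite -[(k * 2).+1]addn1 A_odd.
Qed.

Lemma hb_even k : hb (k * 2 + 2) = hb k.+1 + hb k.
Proof.
rewrite hbA big_ord_recl A0 addn2 /= add0n.
rewrite (@hbE k.+1 (k * 2).+3); last by lia.
rewrite (@hbE k (k * 2).+3); last by lia.
rewrite -big_split /=.
by apply: eq_bigr => i _; rewrite /bump /= add1n; move: (nat_of_ord i) => j; rewrite -[(k * 2).+2]addn2 A_even.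
Qed.

Definition stepR (d : nat) (p : nat * nat) : nat * nat :=
  if d == 1 then (p.1 + p.2, p.2) else (p.1, p.1 + p.2).

Definition R s := foldr stepR (1, 0) s.

Definition all12 (s : seq nat) := all (fun d => (d == 1) || (d == 2)) s.

Lemma hb_app s p : all12 s ->
  hb (hval (p ++ s)) = (R s).1 * hb (hval p) + (R s).2 * hb (hval p).+1.
Proof.
elim: s p => [|d s IH] p /=.
  by rewrite cats0 mul1n mul0n addn0.
move=> /andP[Hd Hs]; rewrite -cat_rcons IH // hval_rcons /R /= -/(R s).
case: (R s) => a b /=; rewrite /stepR.
case/orP: Hd => /eqP -> /=.
- have -> : (hval p * 2 + 1).+1 = hval p * 2 + 2 by lia.
  rewrite hb_odd hb_even; nia.
- have -> : (hval p * 2 + 2).+1 = (hval p).+1 * 2 + 1 by lia.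
  rewrite hb_even hb_odd; nia.
Qed.

Lemma hb_word w : all12 w -> hb (hval w) = (R w).1 + (R w).2.
Proof.
move=> Hw; rewrite -[w]cat0s hb_app //= hb0.
have -> : 1 = 0 * 2 + 1 by [].
by rewrite hb_odd hb0 !muln1.
Qed.

Lemma foldr_n2 t a b : foldr stepR (a, b) (nseq t 2) = (a, t * a + b).
Proof. by elim: t => [|t IH] //=; rewrite IH /stepR /=; congr pair; lia. Qed.

Lemma foldr_n1 t a b : foldr stepR (a, b) (nseq t 1) = (a + t * b, b).
Proof. elim: t => [|t IH] /=; first by rewrite addn0. by rewrite IH /stepR /=; congr pair; lia. Qed.

Lemma hk_R bs : all block_ok bs ->
  hk bs = ((R (flatten (map block_word bs))).1 + (R (flatten (map block_word bs))).2,
           (R (flatten (map block_word bs))).1).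
Proof.
elim: bs => [|[ty t] bs IH] //= /andP[Hb Hbs].
rewrite IH // /R foldr_cat -/(R _).
case: (R _) => a b /=.
move: Hb; rewrite /block_ok /= => /andP[/orP[]/eqP -> Ht].
- rewrite /hk_step /block_len /block_word /= -cats1 foldr_cat /= foldr_n1 /bfun /sfun /=.
  rewrite size_cat size_nseq /= addn1 /=; congr pair; nia.
- rewrite /hk_step /block_len /block_word /= foldr_n2 /bfun /sfun /=.
  rewrite size_nseq /=; congr pair; nia.
Qed.

Theorem mainTheorem13 (n : nat) (w : seq nat) (bs : seq (nat * nat)) :
  ~~ odd n ->
  is_minimal_hyperbinary n w ->
  is_block_decomposition w bs ->
  hb n = (hk bs).1.
Proof.
move=> _ /andP[/andP[/andP[Ha _] /eqP Hv] H0] /andP[/andP[Hok _] /eqP Hw].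
rewrite hk_R // Hw -Hv hb_word //.
apply/allP => x Hx; have := allP Ha x Hx.
have : x != 0 by apply/negP => /eqP Ex; subst x; rewrite Hx in H0.
by case: x {Hx} => [|[|[|]]].
Qed.
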